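(* The relations $[B_{r-1},[B_r,[F_X^+,B_{\tau(r)}]_q]_q]_q=[[B_{r-1},[B_r,F_X^+]_q]_q,B_{\tau(r)}]_q+qc_{\tau(r)}B_{r-1}L_r(K_X-K_X^{-1})$ and $[B_{\tau(r-1)},[B_{\tau(r)},[F_X^-,B_r]_q]_q]_q=[[B_{\tau(r-1)},[B_{\tau(r)},F_X^-]_q]_q,B_r]_q+qc_rB_{\tau(r-1)}L_{\tau(r)}(K_X-K_X^{-1})$ hold in $B_{\mathbf c}$.
   Context: Let $\mathbb K$ be a field of characteristic zero and $q$ an indeterminate. $n\ge1$, $I=\{1,\dots,n\}$, $\mathfrak g=\mathfrak{sl}_{n+1}(\mathbb C)$, simple roots $\alpha_i$, fundamental weights $\varpi_i$, weight lattice $P$, Cartan matrix $a_{ii}=2$, $a_{ij}=-1$ if $|i-j|=1$, else $0$, form $(\alpha_i,\alpha_j)=a_{ij}$, $(\alpha_i,\varpi_j)=\delta_{ij}$. $U_q(\mathfrak g)$ is the $\mathbb K(q^{1/2})$-algebra generated by $E_i,F_i,K_\mu$ ($\mu\in P$) with $K_0=1$, $K_\mu K_\lambda=K_{\mu+\lambda}$, $K_\mu E_i=q^{(\alpha_i,\mu)}E_iK_\mu$, $K_\mu F_i=q^{-(\alpha_i,\mu)}F_iK_\mu$, $E_iF_j-F_jE_i=\delta_{ij}\frac{K_i-K_i^{-1}}{q-q^{-1}}$ ($K_i=K_{\alpha_i}$), and the quantum Serre relations. $[a,b]_c=ab-cba$. Fix $r$ with $2\le r\le\lceil n/2\rceil-1$,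 $X=\{r+1,\dots,n-r\}$, $\tau(i)=n-i+1$ (on weights $\varpi_i\mapsto\varpi_{\tau(i)}$). $E_X^+=[E_{r+1},[\dots,[E_{n-r-1},E_{n-r}]_{q^{-1}}\dots]_{q^{-1}}]_{q^{-1}}$, $E_X^-=[E_{n-r},[\dots,[E_{r+2},E_{r+1}]_{q^{-1}}\dots]_{q^{-1}}]_{q^{-1}}$, $F_X^+=[F_{r+1},[\dots,[F_{n-r-1},F_{n-r}]_q\dots]_q]_q$, $F_X^-=[F_{n-r},[\dots,[F_{r+2},F_{r+1}]_q\dots]_q]_q$ (equal to $E_{r+1}$, $F_{r+1}$ if $|X|=1$); $K_X=K_{r+1}\cdots K_{n-r}$; $L_i=K_iK_{\tau(i)}^{-1}$. $\mathcal M_X$ is generated by $E_j,F_j,K_j^{\pm1}$ ($j\in X$); $U^0_\Theta$ by the $K_\mu$ with $-w_X\tau(\mu)=\mu$ ($w_X$ longest element of the parabolic Weyl subgroup for $X$). Parameters $c_i\in\mathbb K(q^{1/2})^\times$ ($i\in I\setminus X$) with $c_i=c_{\tau(i)}$ for $i\notin X\cup\{r,\tau(r)\}$. $B_i=F_i-c_iE_{\tau(i)}K_i^{-1}$ for $i\in I\setminus(X\cup\{r,\tau(r)\})$, $B_r=F_r-c_r[E_X^+,E_{\tau(r)}]_{q^{-1}}K_r^{-1}$, $B_{\tau(r)}=F_{\tau(r)}-c_{\tau(r)}[E_X^-,E_r]_{q^{-1}}K_{\tau(r)}^{-1}$; $B_{\mathbf c}$ is the subalgebra generated by $\mathcal M_X$,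 $U^0_\Theta$ and the $B_i$. *)

(* Defs.v *)
From HB Require Import structures.
From mathcomp Require Import all_boot all_order all_algebra.
Set Implicit Arguments. Unset Strict Implicit. Unset Printing Implicit Defensive.
Import Order.TTheory GRing.Theory Num.Theory.
Local Open Scope ring_scope.

(* Ground field K(q^{1/2}) : rational functions in one variable s = q^{1/2}. *)
Definition Lfield (k : fieldType) := {fraction {poly k}}.
Definition qhalf (k : fieldType) : Lfield k := FracField.tofrac 'X.
Definition qpar (k : fieldType) : Lfield k := qhalf k ^+ 2.

(* Indices i in I = {1,...,n} are natural numbers 1 <= i <= n.
   Weights mu in P are written in the basis of fundamental weights:
   mu : 'rV[int]_n, coordinate j (0-based) is the coefficient of varpi_{j+1}. *)
Definition cartan (i j : nat) : int :=
  if i == j then 2 else if (i == j.+1) || (j == i.+1) then -1 else 0.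

Definition alpha (n i : nat) : 'rV[int]_n := \row_(j < n) cartan i j.+1.

(* (alpha_i, mu) = coefficient of varpi_i in mu *)
Definition pairA (n i : nat) (mu : 'rV[int]_n) : int :=
  \sum_(j < n | j.+1 == i) mu ord0 j.

Definition tau (n i : nat) : nat := n - i + 1.

Definition qcomm (L : fieldType) (A : algType L) (c : L) (a b : A) : A :=
  a * b - c *: (b * a).

Definition Uq_rels (n : nat) (L : fieldType) (q : L) (A : algType L)
  (E F : nat -> A) (Kw : 'rV[int]_n -> A) : Prop :=
  [/\ Kw 0 = 1,
      (forall mu la, Kw mu * Kw la = Kw (mu + la)),
      ((forall mu i, (1 <= i <= n)%N -> Kw mu * E i = q ^ (pairA i mu) *: (E i * Kw mu)) /\
       (forall mu i, (1 <= i <= n)%N -> Kw mu * F i = q ^ (- pairA i mu) *: (F i * Kw mu))),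
      (forall i j, (1 <= i <= n)%N -> (1 <= j <= n)%N ->
        E i * F j - F j * E i =
        (if i == j then (q - q^-1)^-1 *: (Kw (alpha n i) - Kw (- alpha n i)) else 0))
    & ((forall i j, (1 <= i <= n)%N -> (1 <= j <= n)%N -> ((i == j.+1) || (j == i.+1)) ->
        E i ^+ 2 * E j - (q + q^-1) *: (E i * E j * E i) + E j * E i ^+ 2 = 0
        /\ F i ^+ 2 * F j - (q + q^-1) *: (F i * F j * F i) + F j * F i ^+ 2 = 0) /\
      (forall i j, (1 <= i <= n)%N -> (1 <= j <= n)%N -> (i.+1 < j)%N ->
        E i * E j = E j * E i /\ F i * F j = F j * F i))].

Section Defs.
Variables (n r : nat) (L : fieldType) (q : L) (A : algType L).
Variables (E F : nat -> A) (Kw : 'rV[int]_n -> A) (c : nat -> L).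

(* E_X^+ = [E_{r+1},[...,[E_{n-r-1},E_{n-r}]_{q^-1}...]_{q^-1}]_{q^-1} *)
Definition EXp : A := foldr (fun j acc => qcomm q^-1 (E j) acc) (E (n - r))
                            (iota r.+1 (n - r - r.+1)).
(* E_X^- = [E_{n-r},[...,[E_{r+2},E_{r+1}]_{q^-1}...]_{q^-1}]_{q^-1} *)
Definition EXm : A := foldr (fun j acc => qcomm q^-1 (E j) acc) (E r.+1)
                            (rev (iota r.+2 (n - r - r.+1))).
Definition FXp : A := foldr (fun j acc => qcomm q (F j) acc) (F (n - r))
                            (iota r.+1 (n - r - r.+1)).
Definition FXm : A := foldr (fun j acc => qcomm q (F j) acc) (F r.+1)
                            (rev (iota r.+2 (n - r - r.+1))).

Definition KX : A := \prod_(r.+1 <= j < (n - r).+1) Kw (alpha n j).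
Definition KXinv : A := \prod_(r.+1 <= j < (n - r).+1) Kw (- alpha n j).

Definition Lw (i : nat) : A := Kw (alpha n i) * Kw (- alpha n (tau n i)).

Definition Bgen (i : nat) : A :=
  if i == r then F r - c r *: (qcomm q^-1 EXp (E (tau n r)) * Kw (- alpha n r))
  else if i == tau n r then
    F (tau n r) - c (tau n r) *: (qcomm q^-1 EXm (E r) * Kw (- alpha n (tau n r)))
  else F i - c i *: (E (tau n i) * Kw (- alpha n i)).
End Defs.

(* Main.v *)
Require Import Defs.
From HB Require Import structures.
From mathcomp Require Import all_boot all_order all_algebra.
From mathcomp Require Import ring zify.
Set Implicit Arguments. Unset Strict Implicit. Unset Printing Implicit Defensive.
Import Order.TTheory GRing.Theory Num.Theory.
Local Open Scope ring_scope.

Inductive cexp := CAtom of nat | CAdd of cexp & cexp | COpp of cexp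
  | CMul of cexp & cexp | COne | CZero.
Fixpoint cexp_eqb (a b : cexp) : bool :=
  match a, b with
  | CAtom i, CAtom j => i == j
  | CAdd a1 a2, CAdd b1 b2 => cexp_eqb a1 b1 && cexp_eqb a2 b2
  | COpp a1, COpp b1 => cexp_eqb a1 b1
  | CMul a1 a2, CMul b1 b2 => cexp_eqb a1 b1 && cexp_eqb a2 b2
  | COne, COne => true
  | CZero, CZero => true
  | _, _ => false
  end.
Lemma cexp_eqbP : Equality.axiom cexp_eqb.
Proof.
elim=> [i|a1 IH1 a2 IH2|a1 IH1|a1 IH1 a2 IH2||] [j|b1 b2|b1|b1 b2||] /=;
  try by constructor.
- by apply: (iffP eqP) => [->|[]].
- by case: IH1 => [->|h]; [case: IH2 => [->|h]|]; constructor => // -[].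
- by case: IH1 => [->|h]; constructor => // -[].
- by case: IH1 => [->|h]; [case: IH2 => [->|h]|]; constructor => // -[].
Qed.
HB.instance Definition _ := hasDecEq.Build cexp cexp_eqbP.

Inductive nexp := NAtom of nat | NAdd of nexp & nexp | NOpp of nexp
  | NMul of nexp & nexp | NScale of cexp & nexp | NZero | NOne.

Fixpoint normN (e : nexp) : seq (cexp * seq nat) :=
  match e with
  | NAtom i => [:: (COne, [:: i])]
  | NAdd a b => normN a ++ normN b
  | NOpp a => map (fun p => (COpp p.1, p.2)) (normN a)
  | NMul a b => [seq (CMul p.1 p'.1, p.2 ++ p'.2) | p <- normN a, p' <- normN b]
  | NScale c a => map (fun p => (CMul c p.1, p.2)) (normN a)
  | NZero => [::]
  | NOne => [:: (COne, [::])]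
  end.

Fixpoint coefc (w : seq nat) (l : seq (cexp * seq nat)) : cexp :=
  match l with
  | [::] => CZero
  | p :: l' => if p.2 == w then CAdd p.1 (coefc w l') else coefc w l'
  end.

Definition coefs (l : seq (cexp * seq nat)) : seq cexp :=
  map (fun w => coefc w l) (undup (map snd l)).

Section NCSem.
Variables (L : fieldType) (A : algType L) (envL : seq L) (envA : seq A).

Fixpoint ceval (c : cexp) : L :=
  match c with
  | CAtom i => nth 0 envL i
  | CAdd a b => ceval a + ceval b
  | COpp a => - ceval a
  | CMul a b => ceval a * ceval b
  | COne => 1
  | CZero => 0
  end.

Fixpoint neval (e : nexp) : A :=
  match e with
  | NAtom i => nth 0 envA i
  | NAdd a b => neval a + neval b
  | NOpp a => - neval a
  | NMul a b => neval a * neval b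
  | NScale c a => ceval c *: neval a
  | NZero => 0
  | NOne => 1
  end.

Definition weval (w : seq nat) : A := foldr (fun i acc => nth 0 envA i * acc) 1 w.
Definition nfeval (l : seq (cexp * seq nat)) : A :=
  \sum_(p <- l) ceval p.1 *: weval p.2.

Lemma weval_cat w1 w2 : weval (w1 ++ w2) = weval w1 * weval w2.
Proof. by elim: w1 => [|i w IH] /=; rewrite ?mul1r // IH mulrA. Qed.

Lemma normN_sound e : neval e = nfeval (normN e).
Proof.
rewrite /nfeval; elim: e => [i|a IHa b IHb|a IHa|a IHa b IHb|c a IHa||] /=.
- by rewrite big_seq1 /= scale1r mulr1.
- by rewrite big_cat IHa IHb.
- by rewrite big_map IHa -sumrN; apply: eq_bigr => p _; rewrite scaleNr.
- rewrite big_allpairs_dep IHa IHb mulr_suml; apply: eq_bigr => p _.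
  rewrite mulr_sumr; apply: eq_bigr => p' _ /=.
  by rewrite weval_cat -scalerAl -scalerAr scalerA mulrC.
- by rewrite big_map IHa scaler_sumr; apply: eq_bigr => p _; rewrite scalerA.
- by rewrite big_nil.
- by rewrite big_seq1 /= scale1r.
Qed.

Lemma coefc_eval w l :
  ceval (coefc w l) = \sum_(p <- l | p.2 == w) ceval p.1.
Proof.
elim: l => [|p l IH] /=; first by rewrite big_nil.
by rewrite big_cons; case: ifP => _ //=; rewrite IH.
Qed.

Lemma nfeval_zero_aux (l : seq (cexp * seq nat)) :
  (forall w, has (fun p => p.2 == w) l -> ceval (coefc w l) = 0) -> nfeval l = 0.
Proof.
move: {2}(size l) (leqnn (size l)) => N; elim: N l => [|N IH] l.
  by rewrite leqn0 => /nilP -> _; rewrite /nfeval big_nil.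
case: l => [|p0 l] hs H; first by rewrite /nfeval big_nil.
set w0 := p0.2.
rewrite /nfeval (bigID (fun p => p.2 == w0)) /=.
have -> : \sum_(p <- p0 :: l | p.2 == w0) ceval p.1 *: weval p.2 =
          \sum_(p <- p0 :: l | p.2 == w0) ceval p.1 *: weval w0.
  by apply: eq_bigr => p /eqP ->.
rewrite -scaler_suml -coefc_eval H ?scale0r ?add0r; last by rewrite /= eqxx.
rewrite -big_filter; apply: IH.
  rewrite size_filter /= eqxx /= add0n.
  by apply: leq_trans (count_size _ _) _.
move=> w /hasP [p]; rewrite mem_filter => /andP [hp pl] /eqP <-.
rewrite coefc_eval big_filter_cond.
have := H p.2; rewrite coefc_eval.
have -> : \sum_(i <- p0 :: l | i.2 == p.2) ceval i.1 =
  \sum_(i <- p0 :: l | (i.2 != w0) && (i.2 == p.2)) ceval i.1.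
  by apply: eq_bigl => i; case: (eqVneq i.2 p.2) => [->|]; rewrite ?hp ?eqxx ?andbF.
move=> -> //; apply/hasP; exists p => //; rewrite inE pl orbT.
Qed.

Fixpoint allz (cs : seq cexp) : Prop :=
  match cs with [::] => True | c :: cs' => ceval c = 0 /\ allz cs' end.

Lemma has_pred1' (T : eqType) (x : T) s : has (fun y => y == x) s = (x \in s).
Proof. by elim: s => //= y s ->; rewrite inE eq_sym. Qed.

Lemma nc_check (e1 e2 : nexp) :
  allz (coefs (normN (NAdd e1 (NOpp e2)))) -> neval e1 = neval e2.
Proof.
move=> H; apply/eqP; rewrite -subr_eq0; apply/eqP.
have -> : neval e1 - neval e2 = neval (NAdd e1 (NOpp e2)) by [].
rewrite normN_sound; apply: nfeval_zero_aux => w hw.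
have : w \in undup (map snd (normN (NAdd e1 (NOpp e2)))).
  by rewrite mem_undup; case/hasP: hw => p pl /eqP <-; exact: map_f.
move: H; rewrite /coefs.
elim: (undup _) => [|w' ws IH] //= [h1 h2]; rewrite inE => /orP [/eqP ->|] //.
exact: IH.
Qed.
End NCSem.

Ltac lookup x l :=
  match l with
  | (cons x _) => constr:(0%N)
  | (cons _ ?t) => let n := lookup x t in constr:(S n)
  end.
Ltac addenv x l :=
  match l with
  | context [cons x _] => l
  | _ => eval cbn [cat] in (l ++ [:: x])
  end.

Ltac reifyC t envL :=
  lazymatch t with
  | @GRing.add _ ?a ?b =>
      let r1 := reifyC a envL in
      lazymatch r1 with (?ea, ?env1) =>
      let r2 := reifyC b env1 in
      lazymatch r2 with (?eb, ?env2) => constr:((CAdd ea eb, env2)) end end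
  | @GRing.mul _ ?a ?b =>
      let r1 := reifyC a envL in
      lazymatch r1 with (?ea, ?env1) =>
      let r2 := reifyC b env1 in
      lazymatch r2 with (?eb, ?env2) => constr:((CMul ea eb, env2)) end end
  | @GRing.opp _ ?a =>
      let r1 := reifyC a envL in
      lazymatch r1 with (?ea, ?env1) => constr:((COpp ea, env1)) end
  | @GRing.zero _ => constr:((CZero, envL))
  | @GRing.one _ => constr:((COne, envL))
  | _ => let env' := addenv t envL in
         let i := lookup t env' in constr:((CAtom i, env'))
  end.

Ltac reifyN t envL envA :=
  lazymatch t with
  | @GRing.add _ ?a ?b =>
      let r1 := reifyN a envL envA in
      lazymatch r1 with (?ea, ?eL1, ?eA1) =>
      let r2 := reifyN b eL1 eA1 in
      lazymatch r2 with (?eb, ?eL2, ?eA2) => constr:((NAdd ea eb, eL2, eA2)) end end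
  | @GRing.mul _ ?a ?b =>
      let r1 := reifyN a envL envA in
      lazymatch r1 with (?ea, ?eL1, ?eA1) =>
      let r2 := reifyN b eL1 eA1 in
      lazymatch r2 with (?eb, ?eL2, ?eA2) => constr:((NMul ea eb, eL2, eA2)) end end
  | @GRing.opp _ ?a =>
      let r1 := reifyN a envL envA in
      lazymatch r1 with (?ea, ?eL1, ?eA1) => constr:((NOpp ea, eL1, eA1)) end
  | @GRing.scale _ _ ?s ?a =>
      let r0 := reifyC s envL in
      lazymatch r0 with (?es, ?eL0) =>
      let r1 := reifyN a eL0 envA in
      lazymatch r1 with (?ea, ?eL1, ?eA1) => constr:((NScale es ea, eL1, eA1)) end end
  | @GRing.zero _ => constr:((NZero, envL, envA))
  | @GRing.one _ => constr:((NOne, envL, envA))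
  | _ => let env' := addenv t envA in
         let i := lookup t env' in constr:((NAtom i, envL, env'))
  end.

Ltac nc_reduce L A :=
  lazymatch goal with
  | |- ?x = ?y =>
    let r1 := reifyN x (@nil L) (@nil A) in
    lazymatch r1 with (?e1, ?eL1, ?eA1) =>
    let r2 := reifyN y eL1 eA1 in
    lazymatch r2 with (?e2, ?eL, ?eA) =>
      change (neval eL eA e1 = neval eL eA e2);
      apply: nc_check;
      let cs := eval vm_compute in (coefs (normN (NAdd e1 (NOpp e2)))) in
      change (allz eL cs);
      cbn [allz ceval nth];
      repeat split
    end end
  end.


Lemma cert_lemma (L : fieldType) (A : algType L) (x y c : A) :
  x - y = c -> c = 0 -> x = y.
Proof. by move=> h h0; apply/eqP; rewrite -subr_eq0 h h0. Qed.

Definition qok (L : fieldType) (q : L) :=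
  [/\ q != 0, q^+2 - 1 != 0, q^+2 + 1 != 0 & q - q^-1 != 0].

Section Abs.
Variables (L : fieldType) (A : algType L) (q : L).
Hypothesis hq : qok q.
Let hq0 : q != 0. Proof. by case: hq. Qed.
Let hq1 : q^+2 - 1 != 0. Proof. by case: hq. Qed.
Let hq2 : q^+2 + 1 != 0. Proof. by case: hq. Qed.
Let hq3 : q - q^-1 != 0. Proof. by case: hq. Qed.

Definition Sr (e x : A) : A := e * e * x - (q + q^-1) *: (e * x * e) + x * e * e.

Ltac fin := do 4 rewrite ?mulr0 ?mul0r ?scaler0 ?addr0 ?add0r ?subrr ?oppr0 ?subr0.
Ltac ncf := nc_reduce L A; (try by ring); field; by rewrite ?hq0 ?hq1 ?hq2 ?hq3.

Lemma base_comm (e a R : A) : a * R = R * a -> Sr e R = 0 -> Sr e a = 0 ->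
  qcomm q^-1 e R * qcomm q^-1 e a = qcomm q^-1 e a * qcomm q^-1 e R.
Proof using hq.
move=> h1 h2 h3; have z1 : a * R - R * a = 0 by rewrite h1 subrr.
apply: (cert_lemma (c := ((- 1) / (q * (q^+2 + 1))) *: ((a * R - R * a) * e * e) + ((1) / (q)) *: (e * (a * R - R * a) * e) + ((- q) / ((q^+2 + 1))) *: (e * e * (a * R - R * a)) + ((- q) / ((q^+2 + 1))) *: ((Sr e R) * a) + ((1) / (q * (q^+2 + 1))) *: (a * (Sr e R)) + ((q) / ((q^+2 + 1))) *: ((Sr e a) * R) + ((- 1) / (q * (q^+2 + 1))) *: (R * (Sr e a)))).
  rewrite /Sr /qcomm. ncf.
by rewrite z1 h2 h3; fin.
Qed.

Lemma int_comm (e U V : A) : U * V = V * U -> Sr e U = 0 -> Sr e V = 0 ->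
  e * qcomm q^-1 U (qcomm q^-1 e V) = qcomm q^-1 U (qcomm q^-1 e V) * e.
Proof using hq.
move=> h1 h2 h3; have z1 : U * V - V * U = 0 by rewrite h1 subrr.
apply: (cert_lemma (c := ((1) / (q * (q^+2 + 1))) *: ((U * V - V * U) * e * e) + ((- 1) / (q)) *: (e * (U * V - V * U) * e) + ((q) / ((q^+2 + 1))) *: (e * e * (U * V - V * U)) + ((- q) / ((q^+2 + 1))) *: ((Sr e U) * V) + ((1) / (q * (q^+2 + 1))) *: (V * (Sr e U)) + ((- 1) / (q * (q^+2 + 1))) *: ((Sr e V) * U) + ((q) / ((q^+2 + 1))) *: (U * (Sr e V)))).
  rewrite /Sr /qcomm. ncf.
by rewrite z1 h2 h3; fin.
Qed.

Lemma l4step (u v E F K Ki Km Kmi : A) :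
  u * E = E * u -> F * v = v * F ->
  u * v - v * u = (- (q - q^-1)^-1) *: (K - Ki) ->
  E * F - F * E = (q - q^-1)^-1 *: (Km - Kmi) ->
  K * E = q^-1 *: (E * K) -> Ki * E = q *: (E * Ki) ->
  K * F = q *: (F * K) -> Ki * F = q^-1 *: (F * Ki) ->
  Km * u = q *: (u * Km) -> Km * v = q^-1 *: (v * Km) ->
  Kmi * u = q^-1 *: (u * Kmi) -> Kmi * v = q *: (v * Kmi) ->
  K * Km = Km * K -> Ki * Kmi = Kmi * Ki -> K * Kmi = Kmi * K -> Ki * Km = Km * Ki ->
  qcomm q u F * qcomm q^-1 E v - qcomm q^-1 E v * qcomm q u F =
    (- (q - q^-1)^-1) *: (K * Km - Ki * Kmi).
Proof using hq.
move=> h1 h2 h3 h4 h5 h6 h7 h8 h9 h10 h11 h12 h13 h14 h15 h16.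
apply: (cert_lemma (c := (1) *: ((u * E - E * u) * v * F) + (- q) *: (F * (u * E - E * u) * v) + ((- 1) / (q)) *: (v * (u * E - E * u) * F) + (1) *: (v * F * (u * E - E * u)) + (1) *: ((F * v - v * F) * u * E) + (- q) *: (E * (F * v - v * F) * u) + ((- 1) / (q)) *: (u * (F * v - v * F) * E) + (1) *: (u * E * (F * v - v * F)) + ((- 1) / (q)) *: ((u * v - v * u - (- (q - q^-1)^-1) *: (K - Ki)) * E * F) + ((q^+2) / ((q^+2 - 1))) *: ((u * v - v * u - (- (q - q^-1)^-1) *: (K - Ki)) * Km) + ((- 1) / ((q^+2 - 1))) *: ((u * v - v * u - (- (q - q^-1)^-1) *: (K - Ki)) * Kmi) + (1) *: (E * (u * v - v * u - (- (q - q^-1)^-1) *: (K - Ki)) * F) + (- q) *: (E * F * (u * v - v * u - (- (q - q^-1)^-1) *: (K - Ki))) + (1) *: (F * (u * v - v * u - (- (q - q^-1)^-1) *: (K - Ki)) * E) + ((1) / ((q^+2 - 1))) *: ((E * F - F * E - (q - q^-1)^-1 *: (Km - Kmi)) * K) + ((- q^+2) / ((q^+2 - 1))) *: ((E * F - F * E - (q - q^-1)^-1 *: (Km - Kmi)) * Ki) + (q) *: ((E * F - F * E - (q - q^-1)^-1 *: (Km - Kmi)) * u * v) + (- 1) *: (u * (E * F - F * E - (q - q^-1)^-1 *: (Km - Kmi)) * v) + ((1) / (q)) *: (u * v * (E * F - F * E - (q - q^-1)^-1 *: (Km - Kmi))) + (- 1) *: (v * (E * F - F * E - (q - q^-1)^-1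 *: (Km - Kmi)) * u) + ((1) / ((q^+2 - 1))) *: ((K * E - q^-1 *: (E * K)) * F) + ((- q) / ((q^+2 - 1))) *: (F * (K * E - q^-1 *: (E * K))) + ((- 1) / ((q^+2 - 1))) *: ((Ki * E - q *: (E * Ki)) * F) + ((q) / ((q^+2 - 1))) *: (F * (Ki * E - q *: (E * Ki))) + ((- 1) / (q)) *: (E * (K * F - q *: (F * K))) + ((q^+2) / ((q^+2 - 1))) *: ((Km * u - q *: (u * Km)) * v) + ((- q) / ((q^+2 - 1))) *: (v * (Km * u - q *: (u * Km))) + (q) *: (u * (Km * v - q^-1 *: (v * Km))) + ((- q^+2) / ((q^+2 - 1))) *: ((Kmi * u - q^-1 *: (u * Kmi)) * v) + ((q) / ((q^+2 - 1))) *: (v * (Kmi * u - q^-1 *: (u * Kmi))) + ((- q) / ((q^+2 - 1) * (q^+2 - 1))) *: ((K * Km - Km * K)) + ((- q^+3) / ((q^+2 - 1) * (q^+2 - 1))) *: ((Ki * Kmi - Kmi * Ki)) + ((q) / ((q^+2 - 1) * (q^+2 - 1))) *: ((K * Kmi - Kmi * K)) + ((q^+3) / ((q^+2 - 1) * (q^+2 - 1))) *: ((Ki * Km - Km * Ki)))).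
  rewrite /qcomm. ncf.
move: h1 h2 h3 h4 h5 h6 h7 h8 h9 h10 h11 h12 h13 h14 h15 h16.
do 16 (move/eqP; rewrite -subr_eq0 => /eqP hh; rewrite ?hh; clear hh).
by fin.
Qed.

Lemma S1 (Fr Xm Er Kr Kri KTi : A) :
  Fr * Xm = Xm * Fr -> Er * Fr - Fr * Er = (q - q^-1)^-1 *: (Kr - Kri) -> Kr * Xm = q^-1 *: (Xm * Kr) -> Kri * Xm = q *: (Xm * Kri) -> KTi * Fr = Fr * KTi ->
  Fr * (qcomm q^-1 Xm Er * KTi) - (qcomm q^-1 Xm Er * KTi) * Fr = (- q^-1) *: (Xm * (Kr * KTi)).
Proof using hq.
move=> h0 h1 h2 h3 h4.
apply: (cert_lemma (c := (1) *: ((Fr * Xm - (Xm * Fr)) * Er * KTi) + ((- 1) / (q)) *: (Er * (Fr * Xm - (Xm * Fr)) * KTi) + ((1) / (q)) *: ((Er * Fr - Fr * Er - ((q - q^-1)^-1 *: (Kr - Kri))) * Xm * KTi) + (- 1) *: (Xm * (Er * Fr - Fr * Er - ((q - q^-1)^-1 *: (Kr - Kri))) * KTi) + ((1) / ((q^+2 - 1))) *: ((Kr * Xm - (q^-1 *: (Xm * Kr))) * KTi) + ((- 1) / ((q^+2 - 1))) *: ((Kri * Xm - (q *: (Xm * Kri))) * KTi) + ((1) / (q)) *: (Er * Xm * (KTi * Fr - (Fr * KTi))) + (- 1) *: (Xm * Er * (KTi * Fr - (Fr * KTi))))).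
  rewrite /qcomm. ncf.
move: h0 h1 h2 h3 h4.
do 5 (move/eqP; rewrite -subr_eq0 => /eqP hh; rewrite ?hh; clear hh).
by fin.
Qed.

Lemma S2 (FT Xp ET KT KTi Kri : A) :
  FT * Xp = Xp * FT -> ET * FT - FT * ET = (q - q^-1)^-1 *: (KT - KTi) -> KT * Xp = q^-1 *: (Xp * KT) -> KTi * Xp = q *: (Xp * KTi) -> Kri * FT = FT * Kri ->
  (qcomm q^-1 Xp ET * Kri) * FT - FT * (qcomm q^-1 Xp ET * Kri) = q^-1 *: (Xp * (KT * Kri)).
Proof using hq.
move=> h0 h1 h2 h3 h4.
apply: (cert_lemma (c := (- 1) *: ((FT * Xp - (Xp * FT)) * ET * Kri) + ((1) / (q)) *: (ET * (FT * Xp - (Xp * FT)) * Kri) + ((- 1) / (q)) *: ((ET * FT - FT * ET - ((q - q^-1)^-1 *: (KT - KTi))) * Xp * Kri) + (1) *: (Xp * (ET * FT - FT * ET - ((q - q^-1)^-1 *: (KT - KTi))) * Kri) + ((- 1) / ((q^+2 - 1))) *: ((KT * Xp - (q^-1 *: (Xp * KT))) * Kri) + ((1) / ((q^+2 - 1))) *: ((KTi * Xp - (q *: (Xp * KTi))) * Kri) + ((- 1) / (q)) *: (ET * Xp * (Kri * FT - (FT * Kri))) + (1) *: (Xp * ET * (Kri * FT - (FT * Kri))))).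
  rewrite /qcomm. ncf.
move: h0 h1 h2 h3 h4.
do 5 (move/eqP; rewrite -subr_eq0 => /eqP hh; rewrite ?hh; clear hh).
by fin.
Qed.

Lemma S3 (P Q Kri KTi : A) :
  P * Q = Q * P -> Kri * Q = q^-1 *: (Q * Kri) -> KTi * P = q^-1 *: (P * KTi) -> Kri * KTi = KTi * Kri ->
  (P * Kri) * (Q * KTi) - (Q * KTi) * (P * Kri) = 0.
Proof using hq.
move=> h0 h1 h2 h3.
apply: (cert_lemma (c := ((1) / (q)) *: ((P * Q - (Q * P)) * KTi * Kri) + (1) *: (P * (Kri * Q - (q^-1 *: (Q * Kri))) * KTi) + (- 1) *: (Q * (KTi * P - (q^-1 *: (P * KTi))) * Kri) + ((1) / (q)) *: (P * Q * (Kri * KTi - (KTi * Kri))))).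
  rewrite /qcomm. ncf.
move: h0 h1 h2 h3.
do 4 (move/eqP; rewrite -subr_eq0 => /eqP hh; rewrite ?hh; clear hh).
by fin.
Qed.

Lemma F1 (a x Xm Lr KX KXi : A) :
  a * x = x * a -> x * Lr = Lr * x -> x * Xm - Xm * x = (- (q - q^-1)^-1) *: (KX - KXi) -> a * Xm = Xm * a -> a * KX = KX * a -> a * KXi = KXi * a -> a * Lr = q^-1 *: (Lr * a) -> Lr * KX = KX * Lr -> Lr * KXi = KXi * Lr ->
  qcomm q a (x * (Xm * Lr) - (Xm * Lr) * x) = q *: (a * Lr * (KX - KXi)).
Proof using hq.
move=> h0 h1 h2 h3 h4 h5 h6 h7 h8.
apply: (cert_lemma (c := (1) *: ((a * x - (x * a)) * Xm * Lr) + (- 1 + q^+2) *: (Xm * (a * x - (x * a)) * Lr) + (- q) *: (Xm * Lr * (a * x - (x * a))) + (- q^+2) *: (Xm * a * (x * Lr - (Lr * x))) + (1) *: (a * Xm * (x * Lr - (Lr * x))) + (1 - q^+2) *: ((x * Xm - Xm * x - ((- (q - q^-1)^-1) *: (KX - KXi))) * a * Lr) + (- 1) *: ((a * Xm - (Xm * a)) * x * Lr) + (1) *: (x * (a * Xm - (Xm * a)) * Lr) + (- 1) *: (Lr * (a * KX - (KX * a))) + (1) *: (Lr * (a * KXi - (KXi * a))) + (- q) *: ((a * Lr - (q^-1 *: (Lr * a))) * KX) + (q) *: ((a * Lr - (q^-1 *: (Lr * a))) * KXi) + (q) *: (KX * (a * Lr - (q^-1 *: (Lr * a)))) + (- q)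 *: (KXi * (a * Lr - (q^-1 *: (Lr * a)))) + (- q^+2) *: (Xm * (a * Lr - (q^-1 *: (Lr * a))) * x) + (q^+2) *: (x * Xm * (a * Lr - (q^-1 *: (Lr * a)))) + (- 1) *: ((Lr * KX - (KX * Lr)) * a) + (1) *: ((Lr * KXi - (KXi * Lr)) * a))).
  rewrite /qcomm. ncf.
move: h0 h1 h2 h3 h4 h5 h6 h7 h8.
do 9 (move/eqP; rewrite -subr_eq0 => /eqP hh; rewrite ?hh; clear hh).
by fin.
Qed.

Lemma F2 (a x Xp LT : A) :
  a * x = x * a -> a * Xp = Xp * a -> x * LT = LT * x -> a * LT = q *: (LT * a) ->
  qcomm q a (x * (Xp * LT) - (Xp * LT) * x) = 0.
Proof using hq.
move=> h0 h1 h2 h3.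
apply: (cert_lemma (c := (1) *: ((a * x - (x * a)) * Xp * LT) + (- q) *: (Xp * LT * (a * x - (x * a))) + (- 1) *: ((a * Xp - (Xp * a)) * LT * x) + (1) *: (x * (a * Xp - (Xp * a)) * LT) + (- 1) *: (Xp * (a * LT - (q *: (LT * a))) * x) + (1) *: (x * Xp * (a * LT - (q *: (LT * a)))))).
  rewrite /qcomm. ncf.
move: h0 h1 h2 h3.
do 4 (move/eqP; rewrite -subr_eq0 => /eqP hh; rewrite ?hh; clear hh).
by fin.
Qed.

Lemma T1 (Fa Q KTi : A) :
  Fa * Q = Q * Fa -> KTi * Fa = Fa * KTi ->
  Fa * (Q * KTi) = (Q * KTi) * Fa.
Proof using hq.
move=> h0 h1.
apply: (cert_lemma (c := (1) *: ((Fa * Q - (Q * Fa)) * KTi) + (- 1) *: (Q * (KTi * Fa - (Fa * KTi))))).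
  rewrite /qcomm. ncf.
move: h0 h1.
do 2 (move/eqP; rewrite -subr_eq0 => /eqP hh; rewrite ?hh; clear hh).
by fin.
Qed.

Lemma T2 (Ea Ka FT : A) :
  Ea * FT = FT * Ea -> Ka * FT = FT * Ka ->
  (Ea * Ka) * FT = FT * (Ea * Ka).
Proof using hq.
move=> h0 h1.
apply: (cert_lemma (c := (1) *: ((Ea * FT - (FT * Ea)) * Ka) + (1) *: (Ea * (Ka * FT - (FT * Ka))))).
  rewrite /qcomm. ncf.
move: h0 h1.
do 2 (move/eqP; rewrite -subr_eq0 => /eqP hh; rewrite ?hh; clear hh).
by fin.
Qed.

Lemma T3 (Ea Ka Q KTi : A) :
  Ea * Q = Q * Ea -> Ka * Q = q *: (Q * Ka) -> KTi * Ea = q *: (Ea * KTi) -> Ka * KTi = KTi * Ka ->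
  (Ea * Ka) * (Q * KTi) = (Q * KTi) * (Ea * Ka).
Proof using hq.
move=> h0 h1 h2 h3.
apply: (cert_lemma (c := (q) *: ((Ea * Q - (Q * Ea)) * KTi * Ka) + (1) *: (Ea * (Ka * Q - (q *: (Q * Ka))) * KTi) + (- 1) *: (Q * (KTi * Ea - (q *: (Ea * KTi))) * Ka) + (q) *: (Ea * Q * (Ka * KTi - (KTi * Ka))))).
  rewrite /qcomm. ncf.
move: h0 h1 h2 h3.
do 4 (move/eqP; rewrite -subr_eq0 => /eqP hh; rewrite ?hh; clear hh).
by fin.
Qed.

Lemma jac (d : L) (b x y : A) : b * y = y * b ->
  qcomm d b (qcomm d x y) = qcomm d (qcomm d b x) y.
Proof using hq.
move=> h; apply: (cert_lemma (c := d *: (x * (b*y - y*b) - (b*y - y*b) * x))).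
  rewrite /qcomm; ncf.
by rewrite h; fin.
Qed.

Lemma serre_l (d : L) (e x y : A) : e * y = y * e -> Sr e x = 0 -> Sr e (qcomm d x y) = 0.
Proof using hq.
move=> h h2; apply: (cert_lemma (c := Sr e x * y - d *: (y * Sr e x) + (q+q^-1)*:(e*x*(e * y - y * e)) - x*(e * y - y * e)*e - x*e*(e * y - y * e) - d*:(((e * y - y * e)*e + e*(e * y - y * e))*x - (q+q^-1)*:((e * y - y * e)*x*e)))).
  rewrite /qcomm /Sr; ncf.
by rewrite h h2; fin.
Qed.

Lemma serre_r (d : L) (e x y : A) : e * x = x * e -> Sr e y = 0 -> Sr e (qcomm d x y) = 0.
Proof using hq.
move=> h h2; apply: (cert_lemma (c := x*Sr e y + (e*(e * x - x * e)+(e * x - x * e)*e)*y - (q+q^-1)*:((e * x - x * e)*y*e) - d*:(Sr e y * x - y*(e*(e * x - x * e) + (e * x - x * e)*e) + (q+q^-1)*:(e*y*(e * x - x * e))))).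
  rewrite /qcomm /Sr; ncf.
by rewrite h h2; fin.
Qed.

Lemma comm_qcomm (d : L) (z x y : A) : z * x = x * z -> z * y = y * z ->
  z * qcomm d x y = qcomm d x y * z.
Proof using hq.
move=> h1 h2; apply: (cert_lemma (c := (z*x - x*z)*y + x*(z*y - y*z) - d*:((z*y - y*z)*x + y*(z*x - x*z)))).
  rewrite /qcomm; ncf.
by rewrite h1 h2; fin.
Qed.

Lemma comm_mul (z x y : A) : z * x = x * z -> z * y = y * z -> z * (x * y) = (x * y) * z.
Proof. by move=> h1 h2; rewrite mulrA h1 -mulrA h2 mulrA. Qed.

Lemma comm_add (z x y : A) : z * x = x * z -> z * y = y * z -> z * (x + y) = (x + y) * z.
Proof. by move=> h1 h2; rewrite mulrDr mulrDl h1 h2. Qed.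

Lemma comm_opp (z x : A) : z * x = x * z -> z * (- x) = (- x) * z.
Proof. by move=> h1; rewrite mulrN mulNr h1. Qed.

Lemma comm_scale (s : L) (z x : A) : z * x = x * z -> z * (s *: x) = (s *: x) * z.
Proof. by move=> h1; rewrite -scalerAr -scalerAl h1. Qed.

Lemma comm_sub (z x y : A) : z * x = x * z -> z * y = y * z -> z * (x - y) = (x - y) * z.
Proof. by move=> h1 h2; apply: comm_add => //; apply: comm_opp. Qed.

Lemma qwt_qcomm (d s t : L) (K x y : A) : K * x = s *: (x * K) -> K * y = t *: (y * K) ->
  K * qcomm d x y = (s * t) *: (qcomm d x y * K).
Proof using hq.
move=> h1 h2; apply: (cert_lemma (c := (K*x - s*:(x*K))*y + s*:(x*(K*y - t*:(y*K))) - d*:((K*y - t*:(y*K))*x + t*:(y*(K*x - s*:(x*K)))))).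
  rewrite /qcomm; ncf.
by rewrite h1 h2; fin.
Qed.

Lemma qwt_mul (s t : L) (K x y : A) : K * x = s *: (x * K) -> K * y = t *: (y * K) ->
  K * (x * y) = (s * t) *: ((x * y) * K).
Proof using hq.
move=> h1 h2; apply: (cert_lemma (c := (K*x - s*:(x*K))*y + s*:(x*(K*y - t*:(y*K))))).
  ncf.
by rewrite h1 h2; fin.
Qed.

Lemma mainid (a b x y : A) :
  qcomm q a (qcomm q b (qcomm q x y)) =
  qcomm q (qcomm q a (qcomm q b x)) y
  + q *: ((qcomm q b x) * (a*y - y*a) - (a*y - y*a) * (qcomm q b x))
  + q *: qcomm q a (x * (b*y - y*b) - (b*y - y*b) * x).
Proof using hq. rewrite /qcomm; ncf. Qed.

Lemma BY (cr cT : L) (Fr FT Xp Xm Er ET Kr Kri KT KTi : A) :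
  Fr * FT = FT * Fr ->
  Fr * (qcomm q^-1 Xm Er * KTi) - (qcomm q^-1 Xm Er * KTi) * Fr = (- q^-1) *: (Xm * (Kr * KTi)) ->
  (qcomm q^-1 Xp ET * Kri) * FT - FT * (qcomm q^-1 Xp ET * Kri) = q^-1 *: (Xp * (KT * Kri)) ->
  (qcomm q^-1 Xp ET * Kri) * (qcomm q^-1 Xm Er * KTi) - (qcomm q^-1 Xm Er * KTi) * (qcomm q^-1 Xp ET * Kri) = 0 ->
  (Fr - cr *: (qcomm q^-1 Xp ET * Kri)) * (FT - cT *: (qcomm q^-1 Xm Er * KTi))
  - (FT - cT *: (qcomm q^-1 Xm Er * KTi)) * (Fr - cr *: (qcomm q^-1 Xp ET * Kri))
  = (q^-1 * cT) *: (Xm * (Kr * KTi)) - (q^-1 * cr) *: (Xp * (KT * Kri)).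
Proof using hq.
move=> h0 h1 h2 h3.
apply: (cert_lemma (c := (Fr * FT - FT * Fr) - cT *: ((Fr * (qcomm q^-1 Xm Er * KTi) - (qcomm q^-1 Xm Er * KTi) * Fr) - (- q^-1) *: (Xm * (Kr * KTi)))
  - cr *: (((qcomm q^-1 Xp ET * Kri) * FT - FT * (qcomm q^-1 Xp ET * Kri)) - q^-1 *: (Xp * (KT * Kri)))
  + (cr * cT) *: ((qcomm q^-1 Xp ET * Kri) * (qcomm q^-1 Xm Er * KTi) - (qcomm q^-1 Xm Er * KTi) * (qcomm q^-1 Xp ET * Kri)))).
  ncf.
by rewrite h0 h1 h2 h3; fin.
Qed.

Lemma AY (ca cT : L) (Fa FT Ea Ka Q KTi : A) :
  Fa * FT = FT * Fa -> Fa * (Q * KTi) = (Q * KTi) * Fa ->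
  (Ea * Ka) * FT = FT * (Ea * Ka) -> (Ea * Ka) * (Q * KTi) = (Q * KTi) * (Ea * Ka) ->
  (Fa - ca *: (Ea * Ka)) * (FT - cT *: (Q * KTi)) = (FT - cT *: (Q * KTi)) * (Fa - ca *: (Ea * Ka)).
Proof using hq.
move=> h0 h1 h2 h3.
apply: (cert_lemma (c := (Fa * FT - FT * Fa) - cT *: (Fa * (Q * KTi) - (Q * KTi) * Fa)
  - ca *: ((Ea * Ka) * FT - FT * (Ea * Ka)) + (ca * cT) *: ((Ea * Ka) * (Q * KTi) - (Q * KTi) * (Ea * Ka)))).
  ncf.
by rewrite h0 h1 h2 h3; fin.
Qed.

Lemma FIN (cr cT : L) (a x Xm Xp Lr LT KX KXi : A) :
  qcomm q a (x * (Xm * Lr) - (Xm * Lr) * x) = q *: (a * Lr * (KX - KXi)) ->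
  qcomm q a (x * (Xp * LT) - (Xp * LT) * x) = 0 ->
  q *: qcomm q a (x * ((q^-1 * cT) *: (Xm * Lr) - (q^-1 * cr) *: (Xp * LT))
                 - ((q^-1 * cT) *: (Xm * Lr) - (q^-1 * cr) *: (Xp * LT)) * x)
  = (q * cT) *: (a * Lr * (KX - KXi)).
Proof using hq.
move=> h1 h2.
apply: (cert_lemma (c := (q * (q^-1 * cT)) *: (qcomm q a (x * (Xm * Lr) - (Xm * Lr) * x) - q *: (a * Lr * (KX - KXi)))
   - (q * (q^-1 * cr)) *: (qcomm q a (x * (Xp * LT) - (Xp * LT) * x)))).
  rewrite /qcomm; ncf.
by rewrite h1 h2; fin.
Qed.
End Abs.


Ltac bcase := repeat match goal with |- context [(?x == ?y)%N] => case: (x =P y) => ? end.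

Lemma cartanC i j : cartan i j = cartan j i.
Proof. by rewrite /cartan eq_sym orbC. Qed.

Definition csf (j a l : nat) : int :=
  (j == a)%:Z + (j == a + l)%:Z - (j.+1 == a)%:Z - (j == (a+l).+1)%:Z.

Lemma cs_closed j a l : \sum_(a <= i < (a+l).+1) cartan j i = csf j a l.
Proof.
rewrite /csf; elim: l => [|l IH].
  by rewrite addn0 big_nat1 /cartan; bcase => /=; lia.
rewrite addnS big_nat_recr /= ?IH; last by lia.
by rewrite /cartan; bcase => /=; lia.
Qed.

Section UQ.
Variables (n : nat) (L : fieldType) (q : L) (A : algType L).
Variables (E F : nat -> A) (Kw : 'rV[int]_n -> A).
Hypothesis hrel : Uq_rels q E F Kw.
Hypothesis hq : qok q.
Let hq0 : q != 0. Proof. by case: hq. Qed.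

Lemma K0 : Kw 0 = 1. Proof. by case: hrel. Qed.
Lemma KM mu la : Kw mu * Kw la = Kw (mu + la). Proof. by case: hrel. Qed.
Lemma KC mu la : Kw mu * Kw la = Kw la * Kw mu. Proof. by rewrite !KM addrC. Qed.
Lemma KE mu i : (1 <= i <= n)%N -> Kw mu * E i = q ^ (pairA i mu) *: (E i * Kw mu).
Proof. by case: hrel => _ _ [h _] _ _; exact: h. Qed.
Lemma KF mu i : (1 <= i <= n)%N -> Kw mu * F i = q ^ (- pairA i mu) *: (F i * Kw mu).
Proof. by case: hrel => _ _ [_ h] _ _; exact: h. Qed.
Lemma EFs i : (1 <= i <= n)%N ->
  E i * F i - F i * E i = (q - q^-1)^-1 *: (Kw (alpha n i) - Kw (- alpha n i)).
Proof. by case: hrel => _ _ _ h _ hi; rewrite h // eqxx. Qed.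
Lemma EFd i j : (1 <= i <= n)%N -> (1 <= j <= n)%N -> i != j -> E i * F j = F j * E i.
Proof.
case: hrel => _ _ _ h _ hi hj hij; apply/eqP; rewrite -subr_eq0 h //.
by rewrite (negbTE hij).
Qed.
Lemma SerE i j : (1 <= i <= n)%N -> (1 <= j <= n)%N -> (i == j.+1) || (j == i.+1) ->
  Sr q (E i) (E j) = 0.
Proof.
case: hrel => _ _ _ _ [h _] hi hj hij; have [h1 _] := h i j hi hj hij.
by move: h1; rewrite /Sr !expr2 !mulrA.
Qed.
Lemma EEc i j : (1 <= i <= n)%N -> (1 <= j <= n)%N -> (i.+1 < j)%N || (j.+1 < i)%N ->
  E i * E j = E j * E i.
Proof.
case: hrel => _ _ _ _ [_ h] hi hj /orP [hij|hij].
  by have [] := h i j hi hj hij.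
by have [] := h j i hj hi hij.
Qed.
Lemma FFc i j : (1 <= i <= n)%N -> (1 <= j <= n)%N -> (i.+1 < j)%N || (j.+1 < i)%N ->
  F i * F j = F j * F i.
Proof.
case: hrel => _ _ _ _ [_ h] hi hj /orP [hij|hij].
  by have [] := h i j hi hj hij.
by have [] := h j i hj hi hij.
Qed.

Lemma pairAD i (mu la : 'rV[int]_n) : pairA i (mu + la) = pairA i mu + pairA i la.
Proof. by rewrite /pairA -big_split; apply: eq_bigr => j _; rewrite mxE. Qed.
Lemma pairAN i (mu : 'rV[int]_n) : pairA i (- mu) = - pairA i mu.
Proof. by rewrite /pairA -sumrN; apply: eq_bigr => j _; rewrite mxE. Qed.
Lemma pairA_alpha i j : (1 <= i <= n)%N -> pairA i (alpha n j) = cartan j i.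
Proof.
move=> /andP [h1 h2]; have hlt : (i.-1 < n)%N by lia.
rewrite /pairA (big_pred1 (Ordinal hlt)) ?mxE /=; first by rewrite prednK.
by move=> k /=; rewrite -val_eqE /=; apply/eqP/eqP; lia.
Qed.

Definition sig a l : 'rV[int]_n := \sum_(a <= i < (a+l).+1) alpha n i.
Definition pw (mu : 'rV[int]_n) a l := \sum_(a <= i < (a+l).+1) pairA i mu.

Lemma pairA_sig j a l : (1 <= j <= n)%N -> pairA j (sig a l) = csf j a l.
Proof.
move=> hj; rewrite /sig -cs_closed.
rewrite (big_morph (pairA j) (pairAD j) (_ : pairA j 0 = 0)); last first.
  by rewrite /pairA big1 // => k _; rewrite mxE.
by apply: eq_bigr => i _; rewrite pairA_alpha // cartanC.
Qed.

Lemma pw_alpha j a l : (1 <= a)%N -> (a + l <= n)%N -> pw (alpha n j) a l = csf j a l.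
Proof.
move=> h1 h2; rewrite /pw -cs_closed; apply: eq_big_nat => i hi.
by rewrite pairA_alpha //; lia.
Qed.
Lemma pwN (mu : 'rV[int]_n) a l : pw (- mu) a l = - pw mu a l.
Proof. by rewrite /pw -sumrN; apply: eq_bigr => i _; rewrite pairAN. Qed.
Lemma pw_Sl (mu : 'rV[int]_n) a l : pw mu a l.+1 = pairA a mu + pw mu a.+1 l.
Proof. by rewrite /pw big_ltn ?addSnnS //; lia. Qed.
Lemma pw_Sr (mu : 'rV[int]_n) a l : pw mu a l.+1 = pw mu a l + pairA (a + l.+1) mu.
Proof. by rewrite /pw addnS big_nat_recr //=; lia. Qed.
Lemma sig_Sr a l : sig a l.+1 = sig a l + alpha n (a + l.+1).
Proof. by rewrite /sig addnS big_nat_recr //=; lia. Qed.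

Fixpoint Pv (a l : nat) {struct l} : A :=
  if l is l'.+1 then qcomm q^-1 (E a) (Pv a.+1 l') else E a.
Fixpoint Qv (a l : nat) {struct l} : A :=
  if l is l'.+1 then qcomm q^-1 (E (a + l)) (Qv a l') else E a.
Fixpoint Fv (a l : nat) {struct l} : A :=
  if l is l'.+1 then qcomm q (F a) (Fv a.+1 l') else F a.

Lemma PvS a l : Pv a l.+1 = qcomm q^-1 (E a) (Pv a.+1 l). Proof. by []. Qed.
Lemma QvS a l : Qv a l.+1 = qcomm q^-1 (E (a + l.+1)) (Qv a l). Proof. by []. Qed.
Lemma FvS a l : Fv a l.+1 = qcomm q (F a) (Fv a.+1 l). Proof. by []. Qed.

Lemma Pv_comm (z : A) a l : (forall i, (a <= i <= a + l)%N -> z * E i = E i * z) ->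
  z * Pv a l = Pv a l * z.
Proof.
elim: l a => [|l IH] a h /=; first by apply: h; lia.
apply: (comm_qcomm hq); first by apply: h; lia.
by apply: IH => i hi; apply: h; lia.
Qed.
Lemma Qv_comm (z : A) a l : (forall i, (a <= i <= a + l)%N -> z * E i = E i * z) ->
  z * Qv a l = Qv a l * z.
Proof.
elim: l => [|l IH] h /=; first by apply: h; lia.
apply: (comm_qcomm hq); first by apply: h; lia.
by apply: IH => i hi; apply: h; lia.
Qed.
Lemma Fv_comm (z : A) a l : (forall i, (a <= i <= a + l)%N -> z * F i = F i * z) ->
  z * Fv a l = Fv a l * z.
Proof.
elim: l a => [|l IH] a h /=; first by apply: h; lia.
apply: (comm_qcomm hq); first by apply: h; lia.
by apply: IH => i hi; apply: h; lia.
Qed.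

Lemma Pv_wt mu a l : (1 <= a)%N -> (a + l <= n)%N ->
  Kw mu * Pv a l = q ^ (pw mu a l) *: (Pv a l * Kw mu).
Proof.
elim: l a => [|l IH] a h1 h2 /=.
  by rewrite /pw addn0 big_nat1; apply: KE; lia.
rewrite (qwt_qcomm hq _ (KE _ _) (IH _ _ _)); try lia.
by rewrite pw_Sl expfzDr.
Qed.
Lemma Qv_wt mu a l : (1 <= a)%N -> (a + l <= n)%N ->
  Kw mu * Qv a l = q ^ (pw mu a l) *: (Qv a l * Kw mu).
Proof.
elim: l => [|l IH] h1 h2 /=.
  by rewrite /pw addn0 big_nat1; apply: KE; lia.
rewrite (qwt_qcomm hq _ (KE _ _) (IH _ _)); try lia.
by rewrite pw_Sr expfzDr // mulrC.
Qed.
Lemma Fv_wt mu a l : (1 <= a)%N -> (a + l <= n)%N ->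
  Kw mu * Fv a l = q ^ (- pw mu a l) *: (Fv a l * Kw mu).
Proof.
elim: l a => [|l IH] a h1 h2 /=.
  by rewrite /pw addn0 big_nat1; apply: KF; lia.
rewrite (qwt_qcomm hq _ (KF _ _) (IH _ _ _)); try lia.
by rewrite pw_Sl opprD expfzDr.
Qed.

Lemma Pv_assoc a l : (1 <= a)%N -> (a + l.+1 <= n)%N ->
  qcomm q^-1 (Pv a l) (E (a + l.+1)) = Pv a l.+1.
Proof.
elim: l a => [|l IH] a h1 h2; first by rewrite /= addn1.
rewrite [Pv a l.+2]PvS -(IH a.+1); try lia.
rewrite [Pv a l.+1]PvS addSnnS (jac hq) //; apply: EEc; lia.
Qed.
Lemma Qv_assoc a l : (1 <= a)%N -> (a + l.+1 <= n)%N ->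
  qcomm q^-1 (Qv a.+1 l) (E a) = Qv a l.+1.
Proof.
elim: l => [|l IH] h1 h2; first by rewrite /= addn1.
rewrite [Qv a l.+2]QvS -IH; try lia.
rewrite [Qv a.+1 l.+1]QvS addSnnS (jac hq) //; apply: EEc; lia.
Qed.
Lemma Fv_assoc a l : (1 <= a)%N -> (a + l.+1 <= n)%N ->
  qcomm q (Fv a l) (F (a + l.+1)) = Fv a l.+1.
Proof.
elim: l a => [|l IH] a h1 h2; first by rewrite /= addn1.
rewrite [Fv a l.+2]FvS -(IH a.+1); try lia.
rewrite [Fv a l.+1]FvS addSnnS (jac hq) //; apply: FFc; lia.
Qed.

Lemma SerP j m : (1 <= j)%N -> (j + m.+1 <= n)%N -> Sr q (E j) (Pv j.+1 m) = 0.
Proof.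
case: m => [|m] h1 h2 /=; first by apply: SerE; rewrite ?eqxx ?orbT //; lia.
apply: (serre_l hq).
  by apply: Pv_comm => i hi; apply: EEc; lia.
by apply: SerE; rewrite ?eqxx ?orbT //; lia.
Qed.

Lemma Pv_int a l j : (1 <= a)%N -> (a + l <= n)%N -> (a < j < a + l)%N ->
  E j * Pv a l = Pv a l * E j.
Proof.
elim: l a => [|l IH] a h1 h2 h3 /=; first lia.
case: (ltnP a.+1 j) => hj.
  apply: (comm_qcomm hq); first by apply: EEc; lia.
  by apply: IH; lia.
have ej : j = a.+1 by lia.
case: l IH h2 h3 => [|l] IH h2 h3; first lia.
rewrite ej /=; apply: (int_comm hq).
- by apply: Pv_comm => i hi; apply: EEc; lia.
- by apply: SerE; rewrite ?eqxx //; lia.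
- by apply: SerP; lia.
Qed.

Lemma PQ s l : (2 <= s)%N -> (s + l.+1 <= n)%N ->
  Pv s l.+1 * Qv s.-1 l.+1 = Qv s.-1 l.+1 * Pv s l.+1.
Proof.
move=> h1 h2.
suff H : forall j, (j <= l)%N -> Pv s l.+1 * Qv s.-1 j.+1 = Qv s.-1 j.+1 * Pv s l.+1.
  exact: H.
elim=> [|j IH] hj.
  have -> : Qv s.-1 1 = qcomm q^-1 (E s) (E s.-1) by rewrite /= addn1 prednK //; lia.
  rewrite /=; apply: (base_comm hq).
  - by apply: Pv_comm => i hi; apply: EEc; lia.
  - by apply: SerP; lia.
  - by apply: SerE; rewrite ?prednK ?eqxx //; lia.
rewrite [Qv s.-1 j.+2]/=.
apply: (comm_qcomm hq); last by apply: IH; lia.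
by apply/esym/Pv_int; lia.
Qed.

Lemma L4 s l : (1 <= s)%N -> (s + l <= n)%N ->
  Fv s l * Qv s l - Qv s l * Fv s l =
  (- (q - q^-1)^-1) *: (Kw (sig s l) - Kw (- sig s l)).
Proof.
elim: l => [|l IH] h1 h2.
  rewrite /= /sig addn0 big_nat1 -opprB EFs; last by lia.
  by rewrite scaleNr.
set m := s + l.+1.
rewrite -(Fv_assoc h1 h2).
rewrite [Qv s l.+1]/= -/m sig_Sr -/m opprD -!KM.
have hm : (1 <= m <= n)%N by rewrite /m; lia.
have e1 : pairA m (sig s l) = -1 by rewrite pairA_sig // /csf /m; bcase => /=; lia.
have e2 : pw (alpha n m) s l = -1 by rewrite pw_alpha /csf /m; try lia; bcase => /=; lia.
apply: (l4step hq).
- by apply/esym/Fv_comm => i hi; apply: EFd; rewrite /m; lia.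
- by apply: Qv_comm => i hi; apply/esym/EFd; rewrite /m; lia.
- by apply: IH; lia.
- exact: EFs.
- by rewrite KE // e1 exprN1.
- by rewrite KE // pairAN e1 opprK expr1z.
- by rewrite KF // e1 opprK expr1z.
- by rewrite KF // pairAN e1 opprK exprN1.
- by rewrite Fv_wt ?e2 ?opprK ?expr1z //; lia.
- by rewrite Qv_wt ?e2 ?exprN1 //; lia.
- by rewrite Fv_wt ?pwN ?e2 ?opprK ?exprN1 //; lia.
- by rewrite Qv_wt ?pwN ?e2 ?opprK ?expr1z //; lia.
- exact: KC.
- exact: KC.
- exact: KC.
- exact: KC.
Qed.

Let hq1 : q^+2 - 1 != 0. Proof. by case: hq. Qed.
Let hq2 : q^+2 + 1 != 0. Proof. by case: hq. Qed.
Let hq3 : q - q^-1 != 0. Proof. by case: hq. Qed.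
Ltac ncf2 := nc_reduce L A; (try by ring); field; by rewrite ?hq0 ?hq1 ?hq2 ?hq3.

Lemma pwD (mu la : 'rV[int]_n) a l : pw (mu + la) a l = pw mu a l + pw la a l.
Proof. by rewrite /pw -big_split; apply: eq_bigr => i _; rewrite pairAD. Qed.

Lemma KEz mu i z : (1 <= i <= n)%N -> pairA i mu = z -> Kw mu * E i = q ^ z *: (E i * Kw mu).
Proof. by move=> h <-; apply: KE. Qed.
Lemma KFz mu i z : (1 <= i <= n)%N -> pairA i mu = z -> Kw mu * F i = q ^ (- z) *: (F i * Kw mu).
Proof. by move=> h <-; apply: KF. Qed.
Lemma Pv_wtz mu a l z : (1 <= a)%N -> (a + l <= n)%N -> pw mu a l = z ->
  Kw mu * Pv a l = q ^ z *: (Pv a l * Kw mu).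
Proof. by move=> h1 h2 <-; apply: Pv_wt. Qed.
Lemma Qv_wtz mu a l z : (1 <= a)%N -> (a + l <= n)%N -> pw mu a l = z ->
  Kw mu * Qv a l = q ^ z *: (Qv a l * Kw mu).
Proof. by move=> h1 h2 <-; apply: Qv_wt. Qed.
Lemma Fv_wtz mu a l z : (1 <= a)%N -> (a + l <= n)%N -> pw mu a l = z ->
  Kw mu * Fv a l = q ^ (- z) *: (Fv a l * Kw mu).
Proof. by move=> h1 h2 <-; apply: Fv_wt. Qed.

Lemma a_comm (z : A) (ca : L) (Fa Ea Ka : A) : z * Fa = Fa * z -> z * Ea = Ea * z ->
  z * Ka = Ka * z -> z * (Fa - ca *: (Ea * Ka)) = (Fa - ca *: (Ea * Ka)) * z.
Proof.
move=> h1 h2 h3; apply: comm_sub => //; apply: comm_scale.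
exact: comm_mul.
Qed.

Lemma a_wt (s ca : L) (K Fa Ea Ka : A) : K * Fa = s *: (Fa * K) -> K * Ea = s *: (Ea * K) ->
  K * Ka = Ka * K -> K * (Fa - ca *: (Ea * Ka)) = s *: ((Fa - ca *: (Ea * Ka)) * K).
Proof.
move=> h1 h2 h3.
apply: (cert_lemma (c := (K*Fa - s*:(Fa*K)) - ca*:((K*Ea - s*:(Ea*K))*Ka + s*:(Ea*(K*Ka - Ka*K))))).
  ncf2.
by rewrite h1 h2 h3; do 4 rewrite ?subrr ?mul0r ?mulr0 ?scaler0 ?addr0 ?subr0.
Qed.

Lemma wt_inv (s : L) (K x : A) : s != 0 -> K * x = s *: (x * K) -> x * K = s^-1 *: (K * x).
Proof. by move=> hs ->; rewrite scalerA mulVf // scale1r. Qed.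

Ltac ev := rewrite ?pairAD ?pwD ?pairAN ?pwN ?pairA_alpha ?pairA_sig ?pw_alpha /csf /cartan;
  try lia; bcase => /=; lia.

Lemma core (r l : nat) (cr cT cr1 : L) :
  (2 <= r)%N -> (r.+1 + l.+1 + r = n.+1)%N ->
  let a := F r.-1 - cr1 *: (E (r.+1 + l.+1).+1 * Kw (- alpha n r.-1)) in
  let b := F r - cr *: (qcomm q^-1 (Pv r.+1 l) (E (r.+1 + l.+1)) * Kw (- alpha n r)) in
  let y := F (r.+1 + l.+1) - cT *: (qcomm q^-1 (Qv r.+1 l) (E r) * Kw (- alpha n (r.+1 + l.+1))) in
  let x := Fv r.+1 l in
  qcomm q a (qcomm q b (qcomm q x y)) =
    qcomm q (qcomm q a (qcomm q b x)) y
    + (q * cT) *: (a * (Kw (alpha n r) * Kw (- alpha n (r.+1 + l.+1)))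
                   * (Kw (sig r.+1 l) - Kw (- sig r.+1 l))).
Proof.
move=> hr hn a b y x.
have eP : qcomm q^-1 (Pv r.+1 l) (E (r.+1 + l.+1)) = Pv r.+1 l.+1 by apply: Pv_assoc; lia.
have eQ : qcomm q^-1 (Qv r.+1 l) (E r) = Qv r l.+1 by apply: Qv_assoc; lia.
have hax : a * x = x * a.
  apply/esym/a_comm.
  - by apply/esym/Fv_comm => i hi; apply: FFc; lia.
  - by apply/esym/Fv_comm => i hi; apply: EFd; lia.
  - apply/esym; rewrite (@Fv_wtz _ _ _ 0) ?oppr0 ?expr0z ?scale1r //; try lia; ev.
have haXm : a * Qv r.+1 l = Qv r.+1 l * a.
  apply/esym/a_comm.
  - by apply/esym/Qv_comm => i hi; apply/esym/EFd; lia.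
  - by apply/esym/Qv_comm => i hi; apply: EEc; lia.
  - apply/esym; rewrite (@Qv_wtz _ _ _ 0) ?expr0z ?scale1r //; try lia; ev.
have haXp : a * Pv r.+1 l = Pv r.+1 l * a.
  apply/esym/a_comm.
  - by apply/esym/Pv_comm => i hi; apply/esym/EFd; lia.
  - by apply/esym/Pv_comm => i hi; apply: EEc; lia.
  - apply/esym; rewrite (@Pv_wtz _ _ _ 0) ?expr0z ?scale1r //; try lia; ev.
set T := (r.+1 + l.+1)%N.
have hT : T = (r.+1 + l.+1)%N by [].
set Lr := Kw (alpha n r) * Kw (- alpha n T).
set LT := Kw (alpha n T) * Kw (- alpha n r).
have haK : a * Kw (sig r.+1 l) = Kw (sig r.+1 l) * a.
  apply/esym/a_comm.
  - by rewrite (@KFz _ _ 0) ?oppr0 ?expr0z ?scale1r //; try lia; ev.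
  - by rewrite (@KEz _ _ 0) ?expr0z ?scale1r //; try lia; ev.
  - exact: KC.
have haKi : a * Kw (- sig r.+1 l) = Kw (- sig r.+1 l) * a.
  apply/esym/a_comm.
  - by rewrite (@KFz _ _ 0) ?oppr0 ?expr0z ?scale1r //; try lia; ev.
  - by rewrite (@KEz _ _ 0) ?expr0z ?scale1r //; try lia; ev.
  - exact: KC.
have haLr : a * Lr = q^-1 *: (Lr * a).
  apply: wt_inv => //; apply: a_wt; rewrite /Lr KM.
  - by rewrite (@KFz _ _ (-1)) ?opprK ?expr1z //; try lia; ev.
  - by rewrite (@KEz _ _ 1) ?expr1z //; try lia; ev.
  - exact: KC.
have haLT : a * LT = q *: (LT * a).
  rewrite -[q in q *: _]invrK; apply: wt_inv; first by rewrite invr_eq0.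
  apply: a_wt; rewrite /LT KM.
  - by rewrite (@KFz _ _ 1) ?exprN1 //; try lia; ev.
  - by rewrite (@KEz _ _ (-1)) ?exprN1 //; try lia; ev.
  - exact: KC.
have hxLr : x * Lr = Lr * x.
  by apply/esym; rewrite /Lr KM (@Fv_wtz _ _ _ 0) ?oppr0 ?expr0z ?scale1r //; try lia; ev.
have hxLT : x * LT = LT * x.
  by apply/esym; rewrite /LT KM (@Fv_wtz _ _ _ 0) ?oppr0 ?expr0z ?scale1r //; try lia; ev.
have hL4 := L4 (s := r.+1) (l := l) isT ltac:(lia).
have hLrK : Lr * Kw (sig r.+1 l) = Kw (sig r.+1 l) * Lr by rewrite /Lr !KM addrC.
have hLrKi : Lr * Kw (- sig r.+1 l) = Kw (- sig r.+1 l) * Lr by rewrite /Lr !KM addrC.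
have hF1 := F1 hq hax hxLr hL4 haXm haK haKi haLr hLrK hLrKi.
have hF2 := F2 hq hax haXp hxLT haLT.
have hS1 : F r * (qcomm q^-1 (Qv r.+1 l) (E r) * Kw (- alpha n T))
    - (qcomm q^-1 (Qv r.+1 l) (E r) * Kw (- alpha n T)) * F r
    = (- q^-1) *: (Qv r.+1 l * (Kw (alpha n r) * Kw (- alpha n T))).
  apply: (S1 hq).
  - by apply: Qv_comm => i hi; apply/esym/EFd; lia.
  - by apply: EFs; lia.
  - by rewrite (@Qv_wtz _ _ _ (-1)) ?exprN1 //; try lia; ev.
  - by rewrite (@Qv_wtz _ _ _ 1) ?expr1z //; try lia; ev.
  - by rewrite (@KFz _ _ 0) ?oppr0 ?expr0z ?scale1r //; try lia; ev.
have hS2 : (qcomm q^-1 (Pv r.+1 l) (E T) * Kw (- alpha n r)) * F T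
    - F T * (qcomm q^-1 (Pv r.+1 l) (E T) * Kw (- alpha n r))
    = q^-1 *: (Pv r.+1 l * (Kw (alpha n T) * Kw (- alpha n r))).
  apply: (S2 hq).
  - by apply: Pv_comm => i hi; apply/esym/EFd; lia.
  - by apply: EFs; lia.
  - by rewrite (@Pv_wtz _ _ _ (-1)) ?exprN1 //; try lia; ev.
  - by rewrite (@Pv_wtz _ _ _ 1) ?expr1z //; try lia; ev.
  - by rewrite (@KFz _ _ 0) ?oppr0 ?expr0z ?scale1r //; try lia; ev.
have hS3 : (qcomm q^-1 (Pv r.+1 l) (E T) * Kw (- alpha n r))
      * (qcomm q^-1 (Qv r.+1 l) (E r) * Kw (- alpha n T))
    - (qcomm q^-1 (Qv r.+1 l) (E r) * Kw (- alpha n T))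
      * (qcomm q^-1 (Pv r.+1 l) (E T) * Kw (- alpha n r)) = 0.
  rewrite eP eQ; apply: (S3 hq).
  - by have := PQ (s := r.+1) (l := l) ltac:(lia) ltac:(lia).
  - by rewrite (@Qv_wtz _ _ _ (-1)) ?exprN1 //; try lia; ev.
  - by rewrite (@Pv_wtz _ _ _ (-1)) ?exprN1 //; try lia; ev.
  - exact: KC.
have h0 : F r * F T = F T * F r by apply: FFc; lia.
have hby : b * y - y * b = (q^-1 * cT) *: (Qv r.+1 l * Lr) - (q^-1 * cr) *: (Pv r.+1 l * LT).
  exact: (BY hq cr cT h0 hS1 hS2 hS3).
have hay : a * y = y * a.
  apply: (AY hq).
  - by apply: FFc; lia.
  - apply: (T1 hq).
    + by rewrite eQ; apply: Qv_comm => i hi; apply/esym/EFd; lia.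
    + by rewrite (@KFz _ _ 0) ?oppr0 ?expr0z ?scale1r //; try lia; ev.
  - apply: (T2 hq).
    + by apply: EFd; lia.
    + by rewrite (@KFz _ _ 0) ?oppr0 ?expr0z ?scale1r //; try lia; ev.
  - apply: (T3 hq).
    + by rewrite eQ; apply: Qv_comm => i hi; apply: EEc; lia.
    + by rewrite eQ (@Qv_wtz _ _ _ 1) ?expr1z //; try lia; ev.
    + by rewrite (@KEz _ _ 1) ?expr1z //; try lia; ev.
    + exact: KC.
rewrite (mainid hq) hby (FIN hq cr cT hF1 hF2).
have -> : a * y - y * a = 0 by rewrite hay subrr.
by rewrite mulr0 mul0r subrr scaler0 addr0.
Qed.


Lemma foldr_Pv a l :
  foldr (fun j acc => qcomm q^-1 (E j) acc) (E (a + l)) (iota a l) = Pv a l.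
Proof. by elim: l a => [|l IH] a /=; [rewrite addn0 | rewrite -addSnnS IH]. Qed.
Lemma foldr_Fv a l :
  foldr (fun j acc => qcomm q (F j) acc) (F (a + l)) (iota a l) = Fv a l.
Proof. by elim: l a => [|l IH] a /=; [rewrite addn0 | rewrite -addSnnS IH]. Qed.
Lemma foldr_Qv a l :
  foldr (fun j acc => qcomm q^-1 (E j) acc) (E a) (rev (iota a.+1 l)) = Qv a l.
Proof.
elim: l => [|l IH] //.
by rewrite -[l.+1]addn1 iotaD rev_cat addn1 /= IH addSnnS.
Qed.

Lemma prodKw (a b : nat) (f : nat -> 'rV[int]_n) :
  \prod_(a <= j < b) Kw (f j) = Kw (\sum_(a <= j < b) f j).
Proof.
by rewrite (big_morph Kw (fun x y => esym (KM x y)) K0).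
Qed.

Lemma eq1 (r : nat) (c : nat -> L) : (2 <= r)%N -> (r.+1 <= n.+1 %/ 2)%N ->
  let B := Bgen r q E F Kw c in
  qcomm q (B r.-1) (qcomm q (B r) (qcomm q (FXp n r q F) (B (tau n r)))) =
    qcomm q (qcomm q (B r.-1) (qcomm q (B r) (FXp n r q F))) (B (tau n r))
    + (q * c (tau n r)) *: (B r.-1 * Lw Kw r * (KX r Kw - KXinv r Kw)).
Proof.
move=> hr hr' B.
have hn2 : (r.+1 + r <= n)%N.
  by move: hr'; rewrite leq_divRL // => h; lia.
set l := (n - r - r.+1)%N.
have hn : (r.+1 + l.+1 + r = n.+1)%N by rewrite /l; lia.
have hnr : (n - r = r.+1 + l)%N by rewrite /l; lia.
have htau : tau n r = (r.+1 + l.+1)%N by rewrite /tau; lia.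
have htau1 : tau n r.-1 = (r.+1 + l.+1).+1 by rewrite /tau; lia.
have hFX : FXp n r q F = Fv r.+1 l by rewrite /FXp -/l hnr foldr_Fv.
have hEXp : EXp n r q E = Pv r.+1 l by rewrite /EXp -/l hnr foldr_Pv.
have hEXm : EXm n r q E = Qv r.+1 l by rewrite /EXm -/l foldr_Qv.
have hB1 : B r.-1 = F r.-1 - c r.-1 *: (E (r.+1 + l.+1).+1 * Kw (- alpha n r.-1)).
  rewrite /B /Bgen ifF; last by apply/eqP; lia.
  by rewrite ifF ?htau1 //; apply/eqP; lia.
have hBr : B r = F r - c r *: (qcomm q^-1 (Pv r.+1 l) (E (r.+1 + l.+1)) * Kw (- alpha n r)).
  by rewrite /B /Bgen eqxx hEXp htau.
have hBT : B (tau n r) = F (r.+1 + l.+1) - c (r.+1 + l.+1) *: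
    (qcomm q^-1 (Qv r.+1 l) (E r) * Kw (- alpha n (r.+1 + l.+1))).
  rewrite /B /Bgen ifF; last by apply/eqP; lia.
  by rewrite eqxx hEXm htau.
have hKX : KX r Kw = Kw (sig r.+1 l).
  by rewrite /KX prodKw /sig -hnr.
have hKXi : KXinv r Kw = Kw (- sig r.+1 l).
  by rewrite /KXinv prodKw /sig sumrN -hnr.
rewrite hB1 hBr hBT hFX hKX hKXi /Lw htau.
exact: (core (c r) (c (r.+1 + l.+1)) (c r.-1) hr hn).
Qed.

End UQ.


Section Twist.
Variables (n : nat) (L : fieldType) (q : L) (A : algType L).
Variables (E F : nat -> A) (Kw : 'rV[int]_n -> A).
Hypothesis hrel : Uq_rels q E F Kw.
Hypothesis hq : qok q.

Definition rv (mu : 'rV[int]_n) : 'rV[int]_n := \row_(j < n) mu ord0 (rev_ord j).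
Definition E' i := E (tau n i).
Definition F' i := F (tau n i).
Definition Kw' mu := Kw (rv mu).

Lemma rv0 : rv 0 = 0. Proof. by apply/rowP => j; rewrite !mxE. Qed.
Lemma rvD mu la : rv (mu + la) = rv mu + rv la. Proof. by apply/rowP => j; rewrite !mxE. Qed.
Lemma rvN mu : rv (- mu) = - rv mu. Proof. by apply/rowP => j; rewrite !mxE. Qed.

Lemma pairA_val i (mu : 'rV[int]_n) (h : (i.-1 < n)%N) : (1 <= i)%N ->
  pairA i mu = mu ord0 (Ordinal h).
Proof.
move=> h1; rewrite /pairA (big_pred1 (Ordinal h)) //.
by move=> k /=; rewrite -val_eqE /=; apply/eqP/eqP; lia.
Qed.

Lemma pairA_rv i mu : (1 <= i <= n)%N -> pairA (tau n i) (rv mu) = pairA i mu.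
Proof.
move=> /andP [h1 h2].
have ha : ((tau n i).-1 < n)%N by rewrite /tau; lia.
have hb : (i.-1 < n)%N by lia.
rewrite (pairA_val _ ha) ?(pairA_val _ hb) /tau; try lia.
rewrite mxE; congr (mu ord0 _); apply: val_inj => /=; rewrite /tau; lia.
Qed.

Lemma rv_alpha i : (1 <= i <= n)%N -> rv (alpha n i) = alpha n (tau n i).
Proof.
move=> hi; apply/rowP => j; rewrite !mxE /= /cartan /tau.
have := ltn_ord j; bcase => /=; lia.
Qed.

Lemma Uq_twist : Uq_rels q E' F' Kw'.
Proof.
case: hrel => h0 h1 [hE hF] hEF [hS hC].
have tr : forall i, (1 <= i <= n)%N -> (1 <= tau n i <= n)%N by move=> i hi; rewrite /tau; lia.
split.
- by rewrite /Kw' rv0.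
- by move=> mu la; rewrite /Kw' h1 rvD.
- split=> mu i hi; rewrite /Kw' /E' /F' ?hE ?hF ?tr // pairA_rv //.
- move=> i j hi hj; rewrite /E' /F' hEF ?tr //.
  have -> : (tau n i == tau n j) = (i == j) by apply/eqP/eqP; rewrite /tau; lia.
  case: eqP => // _; by rewrite /Kw' rvN rv_alpha.
- split.
    move=> i j hi hj hij; rewrite /E' /F'; apply: hS; rewrite ?tr //.
    by case/orP: hij => /eqP h; apply/orP; [right|left]; apply/eqP; rewrite /tau; lia.
  move=> i j hi hj hij; rewrite /E' /F'.
  have [] := hC (tau n j) (tau n i) (tr _ hj) (tr _ hi) ltac:(rewrite /tau; lia).
  by move=> -> ->.
Qed.

Lemma iotaSr m l : iota m l.+1 = rcons (iota m l) (m + l).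
Proof. by rewrite -cats1 -addn1 iotaD. Qed.

Lemma map_tau_iota a l : (1 <= a)%N -> (a + l <= n.+1)%N ->
  map (tau n) (iota a l) = rev (iota (n.+2 - a - l) l).
Proof.
elim: l a => [|l IH] a h1 h2 //.
rewrite [map _ _]/= IH; try lia.
rewrite iotaSr rev_rcons.
congr (_ :: rev (iota _ _)); rewrite /tau; lia.
Qed.

Variables (r : nat) (c : nat -> L).
Hypotheses (hr : (2 <= r)%N) (hr' : (r.+1 <= n.+1 %/ 2)%N).
Let hn2 : (r.+1 + r <= n)%N.
Proof. by move: hr'; rewrite leq_divRL // => h; lia. Qed.

Lemma EXp_tw : EXp n r q E' = EXm n r q E.
Proof.
rewrite /EXp /EXm /E' -(foldr_map (tau n) (fun j acc => qcomm q^-1 (E j) acc)).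
rewrite map_tau_iota; try lia.
by congr (foldr _ (E _) (rev (iota _ _))); rewrite /tau; lia.
Qed.
Lemma EXm_tw : EXm n r q E' = EXp n r q E.
Proof.
rewrite /EXp /EXm /E' -(foldr_map (tau n) (fun j acc => qcomm q^-1 (E j) acc)).
rewrite map_rev map_tau_iota ?revK; try lia.
by congr (foldr _ (E _) (iota _ _)); rewrite /tau; lia.
Qed.
Lemma FXp_tw : FXp n r q F' = FXm n r q F.
Proof.
rewrite /FXp /FXm /F' -(foldr_map (tau n) (fun j acc => qcomm q (F j) acc)).
rewrite map_tau_iota; try lia.
by congr (foldr _ (F _) (rev (iota _ _))); rewrite /tau; lia.
Qed.

Let c' i := c (tau n i).

Lemma KX_tw : KX r Kw' = KX r Kw.
Proof.
rewrite /KX /Kw' !(prodKw hrel).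
have -> : \sum_(r.+1 <= j < (n - r).+1) rv (alpha n j) =
          \sum_(r.+1 <= j < (n - r).+1) alpha n (tau n j).
  by apply: eq_big_nat => j hj; rewrite rv_alpha //; lia.
rewrite big_nat_rev; congr Kw; apply: eq_big_nat => j hj.
by congr alpha; rewrite /tau; lia.
Qed.
Lemma KXinv_tw : KXinv r Kw' = KXinv r Kw.
Proof.
rewrite /KXinv /Kw' !(prodKw hrel).
have -> : \sum_(r.+1 <= j < (n - r).+1) rv (- alpha n j) =
          \sum_(r.+1 <= j < (n - r).+1) - alpha n (tau n j).
  by apply: eq_big_nat => j hj; rewrite rvN rv_alpha //; lia.
rewrite big_nat_rev; congr Kw; apply: eq_big_nat => j hj.
by congr (- alpha _ _); rewrite /tau; lia.
Qed.

Lemma eq2 :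
  let B := Bgen r q E F Kw c in
  qcomm q (B (tau n r.-1)) (qcomm q (B (tau n r)) (qcomm q (FXm n r q F) (B r))) =
    qcomm q (qcomm q (B (tau n r.-1)) (qcomm q (B (tau n r)) (FXm n r q F))) (B r)
    + (q * c r) *: (B (tau n r.-1) * Lw Kw (tau n r) * (KX r Kw - KXinv r Kw)).
Proof.
move=> B.
have := eq1 Uq_twist hq c' hr hr'; rewrite /=.
have ttr : tau n (tau n r) = r by rewrite /tau; lia.
have ttr1 : tau n (tau n r.-1) = r.-1 by rewrite /tau; lia.
have h1 : Bgen r q E' F' Kw' c' r.-1 = B (tau n r.-1).
  rewrite /B /Bgen ifF; last by apply/eqP; rewrite /tau; lia.
  rewrite ifF; last by apply/eqP; rewrite /tau; lia.
  rewrite ifF; last by apply/eqP; rewrite /tau; lia.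
  rewrite ifF; last by apply/eqP; rewrite /tau; lia.
  by rewrite /F' /E' /c' /Kw' ttr1 rvN rv_alpha //; lia.
have h2 : Bgen r q E' F' Kw' c' r = B (tau n r).
  rewrite /B /Bgen eqxx ifF; last by apply/eqP; rewrite /tau; lia.
  by rewrite eqxx EXp_tw /F' /E' /c' /Kw' ttr rvN rv_alpha //; lia.
have h3 : Bgen r q E' F' Kw' c' (tau n r) = B r.
  rewrite /B /Bgen ifF; last by apply/eqP; rewrite /tau; lia.
  by rewrite !eqxx EXm_tw /F' /E' /c' /Kw' ttr rvN rv_alpha ?ttr //; rewrite /tau; lia.
rewrite h1 h2 h3 FXp_tw KX_tw KXinv_tw /c' ttr.
by rewrite /Lw /Kw' rvN !rv_alpha ?ttr //; rewrite /tau; lia.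
Qed.
End Twist.


Lemma qok_qpar (k : fieldType) : qok (qpar k).
Proof.
have e : qpar k = FracField.tofrac (('X : {poly k}) ^+ 2) by rewrite /qpar /qhalf tofracXn.
have hq0 : qpar k != 0.
  by rewrite e tofrac_eq0 -size_poly_eq0 size_polyXn.
have hq1 : qpar k ^+ 2 - 1 != 0.
  rewrite e -tofracXn -exprM -(tofrac1 _) -tofracB tofrac_eq0.
  by rewrite -size_poly_eq0 size_Xn_sub_1.
split; [exact: hq0 | exact: hq1 | |].
- rewrite e -tofracXn -exprM -(tofrac1 _) -tofracD tofrac_eq0.
  by rewrite -size_poly_eq0 -polyC1 size_XnaddC.
- have -> : qpar k - (qpar k)^-1 = (qpar k ^+ 2 - 1) * (qpar k)^-1.
    rewrite mulrBl mul1r expr2 (mulfK hq0); reflexivity.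
  apply: mulf_neq0; [exact: hq1 | rewrite invr_eq0; exact: hq0].
Qed.

Unset Implicit Arguments.
Set Strict Implicit.

Theorem lemmaA2 (k : fieldType) (hk : [pchar k] =i pred0) (n r : nat)
  (hn : (1 <= n)%N) (hr : (2 <= r)%N) (hr' : (r.+1 <= n.+1 %/ 2)%N)
  (A : algType (Lfield k)) (E F : nat -> A) (Kw : 'rV[int]_n -> A)
  (c : nat -> Lfield k)
  (hrel : Uq_rels (qpar k) E F Kw)
  (hc0 : forall i, (1 <= i <= n)%N -> ~~ (r.+1 <= i <= n - r)%N -> c i != 0)
  (hcs : forall i, (1 <= i <= n)%N -> ~~ (r.+1 <= i <= n - r)%N ->
           i != r -> i != tau n r -> c i = c (tau n i)) :
  let q := qpar k in
  let B := Bgen r q E F Kw c in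
  qcomm q (B r.-1) (qcomm q (B r) (qcomm q (FXp n r q F) (B (tau n r)))) =
    qcomm q (qcomm q (B r.-1) (qcomm q (B r) (FXp n r q F))) (B (tau n r))
    + (q * c (tau n r)) *: (B r.-1 * Lw Kw r * (KX r Kw - KXinv r Kw))
  /\
  qcomm q (B (tau n r.-1)) (qcomm q (B (tau n r)) (qcomm q (FXm n r q F) (B r))) =
    qcomm q (qcomm q (B (tau n r.-1)) (qcomm q (B (tau n r)) (FXm n r q F))) (B r)
    + (q * c r) *: (B (tau n r.-1) * Lw Kw (tau n r) * (KX r Kw - KXinv r Kw)).
Proof.
move=> q B; have hq := qok_qpar k.
split.
- exact: (eq1 hrel hq c hr hr').
- exact: (eq2 hrel hq c hr hr').
Qed.
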